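(* Fix a dataset $\mathbb D_N$ and a point $x\in\mathcal X$. Let $\lambda_\dagger(x|\mathbb D_N)$ be the minimum eigenvalue of $\mathcal F(x|\mathbb D_N)=\beta^2\Sigma_{L_gB}(x|\mathbb D_N)-\widehat{L_gB}(x|\mathbb D_N)^T\widehat{L_gB}(x|\mathbb D_N)$. Then the GP-CBF-SOCP is feasible at $x$ if and only if $$\begin{bmatrix}\widehat{L_fB}+\gamma(B(x))\\ \widehat{L_gB}^T\end{bmatrix}^T\Sigma_B^{-1}\begin{bmatrix}\widehat{L_fB}+\gamma(B(x))\\ \widehat{L_gB}^T\end{bmatrix}\ge\beta^2$$ holds (all quantities evaluated at $(x|\mathbb D_N)$) and one of the following three cases holds: 1. $\lambda_\dagger(x|\mathbb D_N)<0$; 2. $\lambda_\dagger(x|\mathbb D_N)>0$ and $$\widehat{L_fB}+\gamma(B(x))-\widehat{L_gB}\,\mathcal F^{-1}\Big[\beta^2(\Sigma_{L_gB}^{1/2})^T\Sigma_{L_fB}^{1/2}-\widehat{L_gB}^T\big(\widehat{L_fB}+\gamma(B(x))\big)\Big]\ge0;$$ 3. $\lambda_\dagger(x|\mathbb D_N)=0$ and $$\widehat{L_fB}+\gamma(B(x))-\widehat{L_gB}\,\Sigma_{L_gB}^{-1}(\Sigma_{L_gB}^{1/2})^T\Sigma_{L_fB}^{1/2}>0.$$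
   Context: Consider $\dot x=f(x)+g(x)u$ with $x\in\mathcal X\subset\mathbb R^n$ and $u\in\mathbb R^m$, where $f,g$ are locally Lipschitz and unknown. A nominal model $\tilde f,\tilde g$ is available. Let $B:\mathcal X\to\mathbb R$ be $C^1$, let $\gamma$ be extended class-$\mathcal K_\infty$, and let $u_{\text{ref}}$ be a reference controller. Lie derivatives: $L_{\tilde f}B=\nabla B\,\tilde f$ and $L_{\tilde g}B=\nabla B\,\tilde g\in\mathbb R^{1\times m}$; $L_fB$ and $L_gB$ are defined similarly. Set $\Delta_B(x,u)=(L_fB-L_{\tilde f}B)(x)+(L_gB-L_{\tilde g}B)(x)u$. A dataset $\mathbb D_N=\{((x_j,u_j),z_j)\}$ consists of $z_j=\Delta_B(x_j,u_j)+\epsilon_j$. GP model with the affine dot product kernel $k_c((x,y),(x',y'))=y^T\mathrm{diag}(k_1(x,x'),\dots,k_{m+1}(x,x'))y'$: - Let $y_j=[1,u_j^T]^T$, $\mathbf z=(z_j)$, let $\sigma_n>0$, and let $K_c$ be the Gram matrix on the data. - Let $K_{**}(x)=\mathrm{diag}(k_i(x,x))$, and let $K_{*Y}(x)$ be the $(m+1)\times N$ matrix with entries $k_i(x,x_j)(y_j)_i$. - Define $m_B(x|\mathbb D_N)=K_{*Y}(K_c+\sigma_n^2I)^{-1}\mathbf z$ and $\Sigma_B(x|\mathbb D_N)=K_{**}-K_{*Y}(K_c+\sigma_n^2I)^{-1}K_{*Y}^T$, which is positive definite. - The posterior mean and standard deviation are $\mu_B(x,u|\mathbb D_N)=m_B^T[1;u]$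 and $\sigma_B=\sqrt{[1,u^T]\Sigma_B[1;u]}$. $\beta>0$ is a constant. Derived quantities: - $\widehat{L_fB}=L_{\tilde f}B+(m_B)_1$ and $\widehat{L_gB}=L_{\tilde g}B+((m_B)_2,\dots,(m_B)_{m+1})\in\mathbb R^{1\times m}$. - $\Sigma_B^{1/2}$ is the symmetric positive definite square root of $\Sigma_B$. - $\Sigma_{L_fB}^{1/2}\in\mathbb R^{m+1}$ is the first column of $\Sigma_B^{1/2}$, and $\Sigma_{L_gB}^{1/2}\in\mathbb R^{(m+1)\times m}$ consists of its columns $2,\dots,m+1$. - $\Sigma_{L_gB}=(\Sigma_{L_gB}^{1/2})^T\Sigma_{L_gB}^{1/2}$, which equals the lower-right $m\times m$ block of $\Sigma_B$. The GP-CBF-SOCP at $x$ is: minimize $\|u-u_{\text{ref}}(x)\|_2^2$ subject to $L_{\tilde f}B(x)+L_{\tilde g}B(x)u+\mu_B(x,u|\mathbb D_N)-\beta\sigma_B(x,u|\mathbb D_N)+\gamma(B(x))\ge0$. It is feasible at $x$ if this constraint set is nonempty. *)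

(* Defs.v *)
From HB Require Import structures.
From mathcomp Require Import all_boot all_order all_algebra.
Set Implicit Arguments. Unset Strict Implicit. Unset Printing Implicit Defensive.
Import Order.TTheory GRing.Theory Num.Theory.
Local Open Scope ring_scope.

Section GPCBF.
Variable R : rcfType.

Definition posdef (k : nat) (A : 'M[R]_k) : Prop :=
  A^T = A /\ forall v : 'cV[R]_k, v != 0 -> 0 < (v^T *m A *m v) 0 0.

Definition is_min_eigenvalue (k : nat) (F : 'M[R]_k) (lam : R) : Prop :=
  eigenvalue F lam /\ forall mu, eigenvalue F mu -> lam <= mu.

Variables (n m N : nat).
Variable k : 'I_(1 + m) -> 'rV[R]_n -> 'rV[R]_n -> R.
Variable xs : 'I_N -> 'rV[R]_n.
Variable us : 'I_N -> 'cV[R]_m.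
Variable z : 'cV[R]_N.
Variable sigma_n : R.

Definition yj (j : 'I_N) : 'cV[R]_(1 + m) := col_mx 1 (us j).

Definition Kc : 'M[R]_N :=
  \matrix_(i, j) (\sum_(l < 1 + m) yj i l 0 * k l (xs i) (xs j) * yj j l 0).

Definition Kss (x : 'rV[R]_n) : 'M[R]_(1 + m) := \matrix_(i, j) ((i == j)%:R * k i x x).

Definition KsY (x : 'rV[R]_n) : 'M[R]_(1 + m, N) :=
  \matrix_(l, j) (k l x (xs j) * yj j l 0).

Definition mB (x : 'rV[R]_n) : 'cV[R]_(1 + m) :=
  KsY x *m invmx (Kc + sigma_n ^+ 2 *: 1%:M) *m z.

Definition SigmaB (x : 'rV[R]_n) : 'M[R]_(1 + m) :=
  Kss x - KsY x *m invmx (Kc + sigma_n ^+ 2 *: 1%:M) *m (KsY x)^T.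

Definition muB (x : 'rV[R]_n) (u : 'cV[R]_m) : R :=
  ((mB x)^T *m col_mx 1 u) 0 0.

Definition sigmaB (x : 'rV[R]_n) (u : 'cV[R]_m) : R :=
  Num.sqrt (((col_mx 1 u)^T *m SigmaB x *m col_mx 1 u) 0 0).

(* gradB x = \nabla B(x) (a row vector), ft, gt the nominal model *)
Variable B : 'rV[R]_n -> R.
Variable gradB : 'rV[R]_n -> 'rV[R]_n.
Variable ft : 'rV[R]_n -> 'cV[R]_n.
Variable gt : 'rV[R]_n -> 'M[R]_(n, m).
Variable gamma : R -> R.
Variable beta : R.

Definition LftB (x : 'rV[R]_n) : R := (gradB x *m ft x) 0 0.
Definition LgtB (x : 'rV[R]_n) : 'rV[R]_m := gradB x *m gt x.

Definition hatLfB (x : 'rV[R]_n) : R := LftB x + usubmx (mB x) 0 0.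
Definition hatLgB (x : 'rV[R]_n) : 'rV[R]_m := LgtB x + (dsubmx (mB x))^T.

Definition socp_constraint (x : 'rV[R]_n) (u : 'cV[R]_m) : Prop :=
  0 <= LftB x + (LgtB x *m u) 0 0 + muB x u - beta * sigmaB x u + gamma (B x).

Definition socp_feasible (x : 'rV[R]_n) : Prop :=
  exists u : 'cV[R]_m, socp_constraint x u.

End GPCBF.

(* Main.v *)
Require Import Defs.
From HB Require Import structures.
From mathcomp Require Import all_boot all_order all_algebra.
From mathcomp Require Import ring lra.
Set Implicit Arguments. Unset Strict Implicit. Unset Printing Implicit Defensive.
Import Order.TTheory GRing.Theory Num.Theory.
Local Open Scope ring_scope.

Section Dot.
Variable R : rcfType.

Definition dot (k : nat) (x y : 'cV[R]_k) : R := (x^T *m y) 0 0.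

Lemma dotC k (x y : 'cV[R]_k) : dot x y = dot y x.
Proof. by rewrite /dot -[y^T *m x]trmxK trmx_mul trmxK [in RHS]mxE. Qed.

Lemma dotDr k (x y w : 'cV[R]_k) : dot x (y + w) = dot x y + dot x w.
Proof. by rewrite /dot mulmxDr mxE. Qed.

Lemma dotDl k (x y w : 'cV[R]_k) : dot (y + w) x = dot y x + dot w x.
Proof. by rewrite dotC dotDr !(dotC x). Qed.

Lemma dotZr k a (x y : 'cV[R]_k) : dot x (a *: y) = a * dot x y.
Proof. by rewrite /dot -scalemxAr mxE. Qed.

Lemma dotZl k a (x y : 'cV[R]_k) : dot (a *: y) x = a * dot y x.
Proof. by rewrite dotC dotZr dotC. Qed.

Lemma dotNr k (x y : 'cV[R]_k) : dot x (- y) = - dot x y.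
Proof. by rewrite -scaleN1r dotZr mulN1r. Qed.

Lemma dotNl k (x y : 'cV[R]_k) : dot (- y) x = - dot y x.
Proof. by rewrite dotC dotNr dotC. Qed.

Lemma dotBr k (x y w : 'cV[R]_k) : dot x (y - w) = dot x y - dot x w.
Proof. by rewrite dotDr dotNr. Qed.

Lemma dotBl k (x y w : 'cV[R]_k) : dot (y - w) x = dot y x - dot w x.
Proof. by rewrite dotDl dotNl. Qed.

Lemma dot0r k (x : 'cV[R]_k) : dot x 0 = 0.
Proof. by rewrite /dot mulmx0 mxE. Qed.

Lemma dot0l k (x : 'cV[R]_k) : dot 0 x = 0.
Proof. by rewrite dotC dot0r. Qed.

Lemma dotM k l (x : 'cV[R]_k) (A : 'M[R]_(k, l)) (y : 'cV[R]_l) :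
  dot x (A *m y) = dot (A^T *m x) y.
Proof. by rewrite /dot trmx_mul trmxK mulmxA. Qed.

Lemma dot_sum k (x y : 'cV[R]_k) : dot x y = \sum_i x i 0 * y i 0.
Proof. by rewrite /dot mxE; apply: eq_bigr => i _; rewrite mxE. Qed.

Lemma dot_ge0 k (x : 'cV[R]_k) : 0 <= dot x x.
Proof. by rewrite dot_sum; apply: sumr_ge0 => i _; rewrite -expr2 sqr_ge0. Qed.

Lemma dot_eq0 k (x : 'cV[R]_k) : dot x x = 0 -> x = 0.
Proof.
rewrite dot_sum => /eqP; rewrite psumr_eq0; last by move=> i _; rewrite -expr2 sqr_ge0.
move=> /allP H; apply/matrixP => i j; rewrite ord1 mxE.
by have := H i (mem_index_enum _); rewrite -expr2 sqrf_eq0 => /eqP.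
Qed.

Lemma dot_gt0 k (x : 'cV[R]_k) : x != 0 -> 0 < dot x x.
Proof.
move=> nx; rewrite lt_def dot_ge0 andbT; apply/eqP => /dot_eq0 H.
by rewrite H eqxx in nx.
Qed.

Lemma CS k (x y : 'cV[R]_k) : dot x y ^+ 2 <= dot x x * dot y y.
Proof.
have [y0|ny] := eqVneq y 0.
  by rewrite y0 !dot0r expr0n /= mulr0.
have yp := dot_gt0 ny.
set t := dot x y / dot y y.
have := dot_ge0 (x - t *: y).
rewrite !dotBl !dotBr !dotZl !dotZr (dotC y x) /t.
move=> H.
have e : dot x x - dot x y / dot y y * dot x y -
   (dot x y / dot y y * dot x y - dot x y / dot y y * (dot x y / dot y y * dot y y))
   = dot x x - dot x y ^+ 2 / dot y y.
  by field; rewrite gt_eqF.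
rewrite e subr_ge0 ler_pdivrMr // in H.
Qed.

Lemma ivt_det k (A C : 'M[R]_k) : \det A <= 0 -> 0 < \det C ->
  exists2 s, 0 <= s <= 1 & \det ((1 - s) *: A + s *: C) = 0.
Proof.
move=> hA hC.
pose M : 'M[{poly R}]_k := \matrix_(i,j) ((1 - 'X) * (A i j)%:P + 'X * (C i j)%:P).
have ev s : (\det M).[s] = \det ((1 - s) *: A + s *: C).
  rewrite -horner_evalE -det_map_mx; congr (\det _); apply/matrixP => i j.
  by rewrite !mxE /= horner_evalE !hornerE.
have h01 : (\det M).[0] <= 0 <= (\det M).[1].
  rewrite !ev subr0 scale1r scale0r addr0 subrr scale0r add0r scale1r hA /=; exact: ltW.
have [s /andP[s0 s1] rt] := @poly_ivt R (\det M) 0 1 ler01 h01.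
by exists s; [rewrite s0 s1 | rewrite -ev; apply/eqP].
Qed.
Lemma ker_col k (M : 'M[R]_k) : \det M = 0 ->
  exists2 w : 'cV[R]_k, w != 0 & dot w (M *m w) = 0.
Proof.
move/eqP/det0P => [v nv vM]; exists v^T; first by rewrite trmx_eq0.
by rewrite /dot trmxK mulmxA vM mul0mx mxE.
Qed.

Lemma pd_det k (A : 'M[R]_k) :
  (forall w : 'cV[R]_k, w != 0 -> 0 < dot w (A *m w)) -> 0 < \det A.
Proof.
move=> hA; rewrite ltNge; apply/negP => h.
have h1 : 0 < \det (1%:M : 'M[R]_k) by rewrite det1 ltr01.
have [s /andP[s0 s1] /ker_col [w nw]] := ivt_det h h1.
rewrite mulmxDl -!scalemxAl mul1mx dotDr !dotZr => e.
have := hA w nw; have := dot_gt0 nw; nra.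
Qed.

Lemma det_rank1 k (A : 'M[R]_k) (x : 'cV[R]_k) : A \in unitmx ->
  \det (A - x *m x^T) = \det A * (1 - dot x (invmx A *m x)).
Proof.
move=> uA.
pose M := block_mx A x x^T (1%:M : 'M[R]_1).
have e1 : M = block_mx 1%:M x 0 1%:M *m block_mx (A - x *m x^T) 0 x^T 1%:M.
  rewrite mulmx_block !mul1mx !mul0mx ?mulmx0 ?mulmx1 ?add0r ?addr0.
  by rewrite subrK.
have e2 : M = block_mx A 0 x^T 1%:M *m
   block_mx 1%:M (invmx A *m x) 0 (1%:M - x^T *m (invmx A *m x)).
  rewrite mulmx_block !mul1mx !mul0mx ?mulmx0 ?mulmx1 ?add0r ?addr0 mulKVmx //.
  by rewrite addrC subrK.
have := congr1 determinant e2; rewrite {1}e1 !det_mulmx.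
rewrite det_ublock det_lblock det_lblock det_ublock !det1 !mul1r !mulr1 det_mx11.
by move=> ->; rewrite /dot [in LHS]mxE [X in _ = _ * (_ - X)]mxE !mxE.
Qed.
Lemma dot_sq k s (x y : 'cV[R]_k) :
  dot (x + s *: y) (x + s *: y) = dot x x + 2 * s * dot x y + s ^+ 2 * dot y y.
Proof. rewrite !dotDl !dotDr !dotZl !dotZr (dotC y x); ring. Qed.

Lemma sqrt_le (be N X : R) : 0 < be -> 0 <= N ->
  (be * Num.sqrt N <= X) <-> (0 <= X /\ be ^+ 2 * N <= X ^+ 2).
Proof.
move=> hb hN; have s0 := sqrtr_ge0 N; have s2 := sqr_sqrtr hN.
split.
  move=> h; have h0 : 0 <= be * Num.sqrt N by rewrite mulr_ge0 // ltW.
  split; first exact: le_trans h.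
  rewrite -s2 -exprMn; rewrite ler_sqr //; exact: le_trans h.
move=> [h1 h2]; rewrite -s2 -exprMn in h2.
by rewrite -(ler_sqr (mulr_ge0 (ltW hb) s0) h1).
Qed.
End Dot.

Section Core.
Variable R : rcfType.
Variables (m : nat) (beta : R) (S : 'M[R]_(1 + m)).
Hypotheses (Hbeta : 0 < beta) (HSsym : S^T = S) (HSu : S \in unitmx).
Variables (c : 'cV[R]_(1 + m)) (a : R) (b : 'rV[R]_m).
Local Notation e := (lsubmx S).
Local Notation P := (rsubmx S).
Hypotheses (Ha : a = dot c e) (Hb : b = c^T *m P).
Local Notation G := (P^T *m P).
Local Notation F := (beta ^+ 2 *: G - b^T *m b).

Lemma Sy (u : 'cV[R]_m) : S *m col_mx 1 u = e + P *m u.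
Proof. by rewrite -{1}(hsubmxK S) mul_row_col mulmx1. Qed.

Lemma t_neq0 (u : 'cV[R]_m) : e + P *m u != 0.
Proof.
apply/eqP => h.
have : col_mx (1 : 'M[R]_1) u = 0 by rewrite -(mulKmx HSu (col_mx 1 u)) Sy h mulmx0.
move/(congr1 usubmx); rewrite col_mxKu => /matrixP/(_ 0 0).
by rewrite !mxE /= => /eqP; rewrite oner_eq0.
Qed.

Lemma P_inj (u : 'cV[R]_m) : P *m u = 0 -> u = 0.
Proof.
move=> h.
have : S *m col_mx 0 u = 0 by rewrite -{1}(hsubmxK S) mul_row_col mulmx0 add0r.
move=> h2; have : col_mx (0 : 'M[R]_1) u = 0 by rewrite -(mulKmx HSu (col_mx 0 u)) h2 mulmx0.
by move/(congr1 dsubmx); rewrite col_mxKd => ->; rewrite linear0.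
Qed.

Lemma Pw_neq0 (w : 'cV[R]_m) : w != 0 -> P *m w != 0.
Proof. by move=> nw; apply/eqP => /P_inj h; rewrite h eqxx in nw. Qed.

Lemma bT : b^T = P^T *m c.
Proof. by rewrite Hb trmx_mul trmxK. Qed.

Lemma Bdot (u : 'cV[R]_m) : (b *m u) 0 0 = dot b^T u.
Proof. by rewrite /dot trmxK. Qed.

Lemma BdotP (u : 'cV[R]_m) : dot b^T u = dot c (P *m u).
Proof. by rewrite bT dotM. Qed.

Lemma Xdot (u : 'cV[R]_m) : a + (b *m u) 0 0 = dot c (e + P *m u).
Proof. by rewrite Bdot BdotP dotDr Ha. Qed.

Lemma PG (x y : 'cV[R]_m) : dot x (G *m y) = dot (P *m x) (P *m y).
Proof. by rewrite -mulmxA dotM trmxK. Qed.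

Lemma Gsym : G^T = G.
Proof. by rewrite trmx_mul trmxK. Qed.

Lemma Fsym : F^T = F.
Proof. by rewrite linearB /= linearZ /= Gsym trmx_mul trmxK. Qed.

Lemma dot_bT (w : 'cV[R]_m) (k : 'M[R]_1) : dot w (b^T *m k) = k 0 0 * dot b^T w.
Proof. by rewrite {1}(mx11_scalar k) mul_mx_scalar dotZr dotC. Qed.

Lemma QFb (w z : 'cV[R]_m) :
  dot w (F *m z) = beta ^+ 2 * dot (P *m w) (P *m z) - dot b^T w * dot b^T z.
Proof.
rewrite mulmxBl -scalemxAl dotBr dotZr PG -mulmxA dot_bT Bdot.
by rewrite (mulrC (dot b^T z)).
Qed.

Lemma eig_col mu : eigenvalue F mu -> exists2 p : 'cV[R]_m, p != 0 & F *m p = mu *: p.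
Proof.
move/eigenvalueP => [v vF nv]; exists v^T; first by rewrite trmx_eq0.
by rewrite -{1}Fsym -trmx_mul vF linearZ.
Qed.

Lemma eMgen k (X : 'M[R]_k) s t : (1 - s) *: X + s *: (X + t%:M) = X - (- (s * t))%:M.
Proof. by rewrite scalerDr scalerBl scale1r addrA subrK scale_scalar_mx raddfN opprK. Qed.

Lemma neg_eig (w : 'cV[R]_m) : w != 0 -> dot w (F *m w) <= 0 ->
  exists2 mu, mu <= 0 & eigenvalue F mu.
Proof.
move=> nw hw.
set A := beta ^+ 2 *: G.
have b2 : 0 < beta ^+ 2 by rewrite exprn_gt0.
have Apos : forall x, x != 0 -> 0 < dot x (A *m x).
  move=> x nx; rewrite -scalemxAl dotZr PG; apply: mulr_gt0 => //.
  exact: dot_gt0 (Pw_neq0 nx).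
have dA := pd_det Apos.
have uA : A \in unitmx by rewrite unitmxE unitfE gt_eqF.
set r := invmx A *m b^T.
have Ar : A *m r = b^T by rewrite /r mulKVmx.
set kap := dot b^T r.
have eF : F = A - b^T *m b^T^T by rewrite trmxK.
have detF : \det F = \det A * (1 - kap) by rewrite eF det_rank1.
have hbw : dot b^T w = beta ^+ 2 * dot (P *m r) (P *m w).
  by rewrite -Ar dotC -scalemxAl dotZr PG (dotC (P *m w)).
have hk : kap = beta ^+ 2 * dot (P *m r) (P *m r).
  by rewrite /kap -Ar dotC -scalemxAl dotZr PG.
have cs := CS (P *m r) (P *m w).
have pw := dot_gt0 (Pw_neq0 nw).
have q := QFb w w.
have h1 : beta ^+ 2 * dot (P *m w) (P *m w) <= dot b^T w ^+ 2 by lra.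
have h2 : dot b^T w ^+ 2 <= beta ^+ 2 * dot (P *m w) (P *m w) * kap.
  rewrite hbw hk exprMn.
  have := ler_wpM2l (ltW (exprn_gt0 2 b2)) cs.
  move=> h; apply: (le_trans h); rewrite le_eqVlt; apply/orP; left; apply/eqP; ring.
have kap1 : 1 <= kap.
  have h3 : beta ^+ 2 * dot (P *m w) (P *m w) * 1 <= beta ^+ 2 * dot (P *m w) (P *m w) * kap.
    by rewrite mulr1; exact: le_trans h1 h2.
  by rewrite ler_pM2l ?mulr_gt0 in h3.
have detF0 : \det F <= 0 by rewrite detF pmulr_rle0 // subr_le0.
set t0 := dot b^T b^T + 1.
have t0p : 0 < t0 by rewrite /t0 ltr_wpDl ?dot_ge0.
have Cpos : forall x, x != 0 -> 0 < dot x ((F + t0%:M) *m x).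
  move=> x nx; rewrite mulmxDl mul_scalar_mx dotDr dotZr QFb.
  have := CS b^T x; have := dot_gt0 nx; have := dot_ge0 (P *m x).
  have := mulr_ge0 (ltW b2) (dot_ge0 (P *m x)).
  rewrite /t0; nra.
have [s /andP[s0 s1] hs] := ivt_det detF0 (pd_det Cpos).
exists (- (s * t0)); first by rewrite oppr_le0 mulr_ge0 // ltW.
apply/eigenvalueP.
have eM : (1 - s) *: F + s *: (F + t0%:M) = F - (- (s * t0))%:M.
  by apply: eMgen.
move: hs; rewrite eM => /eqP/det0P [v nv vM].
exists v => //.
by move: vM; rewrite mulmxBr mul_mx_scalar => /eqP; rewrite subr_eq0 => /eqP.
Qed.

Lemma PD_F lam : 0 < lam -> is_min_eigenvalue F lam ->
  forall w, w != 0 -> 0 < dot w (F *m w).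
Proof.
move=> hl [_ hmin] w nw; rewrite ltNge; apply/negP => h.
have [mu mu0 emu] := neg_eig nw h.
by have := hmin _ emu; rewrite leNgt (le_lt_trans mu0 hl).
Qed.

Local Notation t u := (e + P *m u).
Definition feas' := exists u : 'cV[R]_m,
  0 <= dot c (t u) /\ beta ^+ 2 * dot (t u) (t u) <= dot c (t u) ^+ 2.

Lemma nec_norm : feas' -> beta ^+ 2 <= dot c c.
Proof.
move=> [u [h0 h1]]; have cs := CS c (t u); have tp := dot_gt0 (t_neq0 u).
by rewrite -(ler_pM2r tp); exact: le_trans h1 cs.
Qed.

Lemma scal_lt (b2 E Q W a0 h0 : R) : 0 < b2 -> 0 <= E -> 0 <= Q -> b2 * Q < W ^+ 2 ->
  exists s, 0 <= a0 + s * W /\ b2 * (E + 2 * s * h0 + s ^+ 2 * Q) <= (a0 + s * W) ^+ 2.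
Proof.
move=> hb hE hQ hW.
set V := W ^+ 2.
have V0 : 0 < V by apply: le_lt_trans hW; rewrite mulr_ge0 // ltW.
set d := V * (V - b2 * Q).
have d0 : 0 < d by rewrite /d mulr_gt0 // subr_gt0.
set X0 := 2 * a0 * V - 2 * W * b2 * h0.
set M := `|X0| + b2 * E.
have M0 : 0 <= M by rewrite /M addr_ge0 ?normr_ge0 ?mulr_ge0 // ltW.
set K := 1 + M / d + `|a0| / V.
have K1 : 1 <= K by rewrite /K -addrA lerDl addr_ge0 ?divr_ge0 ?normr_ge0 // ltW.
have Kd : M <= K * d.
  have -> : K * d = d + M + `|a0| / V * d by rewrite /K; field; rewrite !gt_eqF.
  have : 0 <= `|a0| / V * d by rewrite mulr_ge0 ?divr_ge0 ?normr_ge0 // ltW.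
  lra.
have KV : `|a0| <= K * V.
  have -> : K * V = V + M / d * V + `|a0| by rewrite /K; field; rewrite !gt_eqF.
  have : 0 <= M / d * V by rewrite mulr_ge0 ?divr_ge0 // ltW.
  lra.
exists (K * W); split.
  have : - a0 <= `|a0| by rewrite -normrN ler_norm.
  have -> : K * W * W = K * V by rewrite /V expr2 mulrA.
  lra.
rewrite -subr_ge0.
have -> : (a0 + K * W * W) ^+ 2 - b2 * (E + 2 * (K * W) * h0 + (K * W) ^+ 2 * Q)
   = K * (K * d) + K * X0 + a0 ^+ 2 - b2 * E by rewrite /d /X0 /V; ring.
have f1 : K * M <= K * (K * d) by rewrite ler_wpM2l // (le_trans ler01 K1).
have f2 : K * `|X0| + b2 * E <= K * M.
  rewrite /M mulrDr lerD2l; rewrite -{1}(mul1r (b2 * E)) ler_wpM2r //.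
  by rewrite mulr_ge0 // ltW.
have f3 : - (K * X0) <= K * `|X0|.
  by rewrite -mulrN ler_wpM2l ?(le_trans ler01 K1) // -normrN ler_norm.
have f4 : 0 <= a0 ^+ 2 by rewrite sqr_ge0.
lra.
Qed.

Lemma LT_suf lam : lam < 0 -> eigenvalue F lam -> feas'.
Proof.
move=> hl /eig_col [p np Fp].
have hp := QFb p p; rewrite Fp dotZr in hp.
have pp := dot_gt0 np.
have hneg : beta ^+ 2 * dot (P *m p) (P *m p) < dot b^T p ^+ 2.
  by rewrite -subr_lt0 -hp pmulr_llt0.
have [s [h1 h2]] := scal_lt a (dot e (P *m p)) (exprn_gt0 2 Hbeta) (dot_ge0 e)
  (dot_ge0 _) hneg.
exists (s *: p).
rewrite -scalemxAr dot_sq dotDr dotZr -Ha -BdotP.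
by split.
Qed.

Section GT.
Variable lam : R.
Hypotheses (hl : 0 < lam) (hmin : is_min_eigenvalue F lam).

Let FP := PD_F hl hmin.

Lemma FPSD (w : 'cV[R]_m) : 0 <= dot w (F *m w).
Proof.
have [->|nw] := eqVneq w 0; first by rewrite mulmx0 dot0r.
exact: ltW (FP nw).
Qed.

Lemma uF : F \in unitmx.
Proof. by rewrite unitmxE unitfE gt_eqF // pd_det. Qed.

Local Notation Y := (b^T *m a%:M - beta ^+ 2 *: (P^T *m e)).
Local Notation us := (invmx F *m Y).

Lemma K1eq : a - (b *m invmx F *m (beta ^+ 2 *: (P^T *m e) - b^T *m a%:M)) 0 0
  = dot c (t us).
Proof.
by rewrite -Xdot -mulmxA -[X in invmx F *m X]opprB mulmxN !Bdot dotNr.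

Qed.

Definition q (u : 'cV[R]_m) := dot c (t u) ^+ 2 - beta ^+ 2 * dot (t u) (t u).

Lemma key (w : 'cV[R]_m) : q (us + w) = q us - dot w (F *m w).
Proof.
have Fus : F *m us = Y by rewrite mulKVmx // uF.
have lin : dot w (F *m us) = a * dot b^T w - beta ^+ 2 * dot (P *m w) e.
  rewrite Fus dotBr dot_bT dotZr dotM trmxK; congr (_ * _ - _).
  by rewrite mxE eqxx mulr1n.
have q2 := QFb w us.
have q1 := QFb w w.
have Xs : dot c (t us) = a + dot b^T us by rewrite -Bdot Xdot.
have Bw := BdotP w.
rewrite /q mulmxDr addrA q1 !BdotP.
rewrite !dotDr !dotDl ?dotDr.
rewrite q2 !BdotP in lin.
rewrite -Ha.
rewrite (dotC (P *m us) e) (dotC (P *m w) e) (dotC (P *m w) (P *m us)).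
rewrite (dotC (P *m w) e) (dotC (P *m w) (P *m us)) in lin.
nra.
Qed.

Lemma tw (w : 'cV[R]_m) : dot c (t (us + w)) = dot c (t us) + dot b^T w.
Proof. by rewrite mulmxDr addrA [in LHS]dotDr BdotP. Qed.

Lemma GT_nec : feas' -> 0 <= dot c (t us).
Proof.
move=> [u0 [X0 q0]].
rewrite leNgt; apply/negP => hXs.
set d := u0 - us.
have eu : u0 = us + d by rewrite /d addrC subrK.
have Bd : 0 < dot b^T d by move: X0; rewrite eu tw; lra.
set rho := - dot c (t us) / dot b^T d.
have r0 : 0 < rho by rewrite /rho divr_gt0 // oppr_gt0.
have r1 : rho <= 1.
  rewrite /rho ler_pdivrMr // mul1r; move: X0; rewrite eu tw; lra.
have hq0 : 0 <= q u0 by rewrite /q subr_ge0.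
have k1 := key d; rewrite -eu in k1.
have k2 := key (rho *: d); rewrite -scalemxAr dotZl dotZr in k2.
have D0 := FPSD d.
have zero : dot c (t (us + rho *: d)) = 0.
  by rewrite tw dotZr /rho; field; rewrite gt_eqF.
have qneg : q (us + rho *: d) < 0.
  rewrite /q zero expr0n /= sub0r oppr_lt0 mulr_gt0 ?exprn_gt0 //.
  exact: dot_gt0 (t_neq0 _).
have h3 : rho * (rho * dot d (F *m d)) <= dot d (F *m d).
  have h4 : rho * dot d (F *m d) <= dot d (F *m d) by rewrite ler_piMl.
  apply: le_trans h4; rewrite ler_piMl //; exact: mulr_ge0 (ltW r0) D0.
lra.
Qed.

Lemma Sdec (x : 'cV[R]_(1 + m)) : S *m x = (usubmx x 0 0) *: e + P *m dsubmx x.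
Proof.
rewrite -{1}(hsubmxK S) -{1}(vsubmxK x) mul_row_col.
by rewrite {1}(mx11_scalar (usubmx x)) mul_mx_scalar.
Qed.

Lemma GT_suf : beta ^+ 2 <= dot c c -> 0 <= dot c (t us) -> feas'.
Proof.
move=> hN hX; exists us; split => //.
suff: 0 <= q us by rewrite /q subr_ge0.
have qle : forall u, q u <= q us.
  move=> u; have := key (u - us); rewrite [us + _]addrC subrK => ->.
  by rewrite gerBl FPSD.
have b2 : 0 < beta ^+ 2 by rewrite exprn_gt0.
set z := invmx S *m c.
have cdec : c = usubmx z 0 0 *: e + P *m dsubmx z by rewrite -Sdec mulKVmx.
move: cdec; set z0 := usubmx z 0 0; set zr := dsubmx z => cdec.
have [z00|nz0] := eqVneq z0 0.
  rewrite z00 scale0r add0r in cdec.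
  have nzr : zr != 0.
    apply/eqP => zr0; move: hN; rewrite cdec zr0 mulmx0 dot0r; lra.
  have := FP nzr; rewrite QFb BdotP -cdec.
  nra.
apply: le_trans (qle (z0^-1 *: zr)); rewrite /q.
have -> : t (z0^-1 *: zr) = z0^-1 *: c.
  by rewrite cdec scalerDr scalerA mulVf // scale1r -scalemxAr.
rewrite dotZr dotZl dotZr.
have := dot_ge0 c; have := sqr_ge0 (z0^-1); nra.
Qed.

End GT.

Section EQ.
Variable p : 'cV[R]_m.
Hypotheses (np : p != 0) (Fp0 : F *m p = 0).

Local Notation W := (dot b^T p).
Definition rr := (beta ^+ 2 / dot b^T p) *: p.
Local Notation r' := rr.
Local Notation g := (P *m rr).

Lemma b2pos : 0 < beta ^+ 2. Proof. by rewrite exprn_gt0. Qed.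

Lemma Wsq : W ^+ 2 = beta ^+ 2 * dot (P *m p) (P *m p).
Proof. have := QFb p p; rewrite Fp0 dot0r expr2 => h; lra. Qed.

Lemma Wn0 : W != 0.
Proof.
apply/eqP => w0; have := Wsq; rewrite w0 expr0n /= => /esym/eqP.
by rewrite mulf_eq0 gt_eqF ?b2pos //= => /eqP /dot_eq0 /P_inj h; move: np; rewrite h eqxx.
Qed.

Lemma Gr : G *m r' = b^T.
Proof.
have h : beta ^+ 2 *: (G *m p) = W *: b^T.
  move/eqP: Fp0; rewrite mulmxBl subr_eq0 -scalemxAl => /eqP ->.
  by rewrite -mulmxA {1}(mx11_scalar (b *m p)) mul_mx_scalar Bdot.
rewrite /rr -scalemxAr mulrC -scalerA h scalerA mulVf ?scale1r //.
  exact: Wn0.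
Qed.

Lemma uG : G \in unitmx.
Proof.
rewrite unitmxE unitfE gt_eqF // pd_det // => x nx.
by rewrite PG dot_gt0 // Pw_neq0.
Qed.

Lemma Bg (u : 'cV[R]_m) : dot b^T u = dot g (P *m u).
Proof. by rewrite -Gr -mulmxA dotC dotM trmxK dotC. Qed.

Lemma Br : dot b^T r' = beta ^+ 2.
Proof. by rewrite /rr dotZr mulfVK // Wn0. Qed.

Lemma gg : dot g g = beta ^+ 2.
Proof. by rewrite -Bg Br. Qed.

Lemma K0eq : a - (b *m invmx G *m P^T *m e) 0 0 = a - dot g e.
Proof.
have e1 : invmx G *m b^T = r' by rewrite -Gr mulKmx // uG.
have e2 : b *m invmx G = r'^T.
  by rewrite -e1 trmx_mul trmxK trmx_inv Gsym.
by rewrite e2 -trmx_mul.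
Qed.

Lemma EQ_nec : feas' -> 0 < a - dot g e.
Proof.
move=> [u0 [X0 q0]].
rewrite ltNge; apply/negP => hK.
set Y := dot g (t u0).
have eY : Y = dot g e + dot b^T u0 by rewrite /Y dotDr Bg.
have eX : dot c (t u0) = a + dot b^T u0 by rewrite -Xdot Bdot.
have b2 := b2pos.
have XY : dot c (t u0) <= Y by rewrite eX eY; lra.
have T0 := dot_ge0 (t u0).
have q1 : beta ^+ 2 * dot (t u0) (t u0) <= Y ^+ 2.
  have Y0 : 0 <= Y := le_trans X0 XY.
  by apply: le_trans q0 _; rewrite ler_sqr ?nnegrE.
set V := Y *: g - beta ^+ 2 *: t u0.
have hV : dot V V = beta ^+ 2 * (beta ^+ 2 * dot (t u0) (t u0) - Y ^+ 2).
  rewrite /V !dotBl !dotBr !dotZl !dotZr gg (dotC (t u0) g) -/Y; ring.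
have V0 : V = 0.
  apply: dot_eq0; apply/le_anti; rewrite dot_ge0 andbT hV.
  have : beta ^+ 2 * dot (t u0) (t u0) - Y ^+ 2 <= 0 by rewrite subr_le0.
  nra.
have := t_neq0 (u0 - (Y / beta ^+ 2) *: r').
rewrite mulmxBr -scalemxAr addrA.
have -> : t u0 - (Y / beta ^+ 2) *: g = - (beta ^+ 2)^-1 *: V.
  rewrite /V scalerBr !scalerA !mulNr mulVf ?gt_eqF // !scaleNr scale1r opprK addrC (mulrC Y).
  by [].
by rewrite V0 scaler0 eqxx.
Qed.

Lemma EQ_suf : 0 < a - dot g e -> feas'.
Proof.
move=> hK.
set u1 := invmx G *m (P^T *m e).
have Gu1 : G *m u1 = P^T *m e by rewrite mulKVmx // uG.
have Bu1 : dot b^T u1 = dot g e by rewrite Bg -PG Gu1 dotM trmxK.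
set K := a - dot g e.
set ep := e - P *m u1.
set E := dot ep ep.
set lam := E / (2 * K).
have hl : 2 * K * lam = E by rewrite /lam mulrC divfK // mulf_neq0 // ?gt_eqF // ltr0Sn.
exists (- u1 + lam *: r').
have et : t (- u1 + lam *: r') = ep + lam *: g.
  by rewrite mulmxDr mulmxN -scalemxAr addrA.
have eX : dot c (t (- u1 + lam *: r')) = K + lam * beta ^+ 2.
  by rewrite -Xdot Bdot dotDr dotNr dotZr Bu1 Br /K addrA.
have epg : dot ep g = 0.
  by rewrite /ep dotBl (dotC (P *m u1)) -Bg Bu1 dotC subrr.
rewrite eX et dot_sq epg gg.
have b2 := b2pos.
have E0 : 0 <= E := dot_ge0 ep.
have l0 : 0 <= lam by rewrite /lam divr_ge0 // mulr_ge0 // ltW.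
have K0 : 0 <= K := ltW hK.
have lb : 0 <= lam * beta ^+ 2 by rewrite mulr_ge0 // ltW.
split; first by rewrite addr_ge0.
rewrite mulr0 addr0 -/E -subr_ge0.
have -> : (K + lam * beta ^+ 2) ^+ 2 - beta ^+ 2 * (E + lam ^+ 2 * beta ^+ 2)
  = K ^+ 2 + beta ^+ 2 * (2 * K * lam - E) by ring.
by rewrite hl subrr mulr0 addr0 sqr_ge0.
Qed.

End EQ.

Theorem core lam : is_min_eigenvalue F lam ->
  (feas' <-> (beta ^+ 2 <= dot c c /\
    (lam < 0 \/
     (0 < lam /\
      0 <= a - (b *m invmx F *m (beta ^+ 2 *: (P^T *m e) - b^T *m a%:M)) 0 0) \/
     (lam = 0 /\ 0 < a - (b *m invmx G *m P^T *m e) 0 0)))).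
Proof.
move=> hmin; split.
  move=> hf; split; first exact: nec_norm.
  have [hl|hl|hl] := ltgtP lam 0.
  - by left.
  - right; left; split => //; rewrite K1eq; exact: GT_nec hl hmin hf.
  - right; right; split => //.
    have [p np Fp] := eig_col hmin.1; rewrite hl scale0r in Fp.
    rewrite (K0eq np Fp); exact: EQ_nec np Fp hf.
move=> [hN [hl | [[hl hK] | [hl hK]]]].
- exact: LT_suf hl hmin.1.
- rewrite K1eq in hK; exact: GT_suf hl hmin hN hK.
- have [p np Fp] := eig_col hmin.1; rewrite hl scale0r in Fp.
  rewrite (K0eq np Fp) in hK; exact: EQ_suf np Fp hK.
Qed.

End Core.

Unset Implicit Arguments.
Set Strict Implicit.

Theorem theorem2 (R : rcfType) (n m N : nat)
  (k : 'I_(1 + m) -> 'rV[R]_n -> 'rV[R]_n -> R)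
  (xs : 'I_N -> 'rV[R]_n) (us : 'I_N -> 'cV[R]_m) (z : 'cV[R]_N) (sigma_n : R)
  (B : 'rV[R]_n -> R) (gradB : 'rV[R]_n -> 'rV[R]_n)
  (ft : 'rV[R]_n -> 'cV[R]_n) (gt : 'rV[R]_n -> 'M[R]_(n, m))
  (gamma : R -> R) (beta : R) (x : 'rV[R]_n)
  (Hm : (0 < m)%N) (Hsn : 0 < sigma_n) (Hbeta : 0 < beta)
  (HSigma : posdef (SigmaB k xs us sigma_n x))
  (* S = Sigma_B^{1/2}, the symmetric positive definite square root *)
  (S : 'M[R]_(1 + m)) (HS : posdef S) (HS2 : S *m S = SigmaB k xs us sigma_n x)
  (lam : R) :
  let Sig := SigmaB k xs us sigma_n x in
  let a := hatLfB k xs us z sigma_n gradB ft x + gamma (B x) in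
  let b := hatLgB k xs us z sigma_n gradB gt x in
  let SLf := lsubmx S in           (* Sigma_{L_fB}^{1/2}, first column *)
  let SLg := rsubmx S in           (* Sigma_{L_gB}^{1/2}, columns 2..m+1 *)
  let SigLg := SLg^T *m SLg in     (* Sigma_{L_gB} *)
  let F := beta ^+ 2 *: SigLg - b^T *m b in
  let v := col_mx (a%:M : 'M[R]_1) b^T in
  is_min_eigenvalue F lam ->
  (socp_feasible k xs us z sigma_n B gradB ft gt gamma beta x <->
   (beta ^+ 2 <= (v^T *m invmx Sig *m v) 0 0 /\
    (lam < 0 \/
     (0 < lam /\
      0 <= a - (b *m invmx F *m (beta ^+ 2 *: (SLg^T *m SLf) - b^T *m a%:M)) 0 0) \/
     (lam = 0 /\
      0 < a - (b *m invmx SigLg *m SLg^T *m SLf) 0 0)))).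
Proof.
move=> Sig a b SLf SLg SigLg F v hmin.
have [Ssym Spd] := HS.
have uS : S \in unitmx.
  rewrite unitmxE unitfE gt_eqF // pd_det // => w nw.
  by rewrite /dot mulmxA; apply: Spd.
set c := invmx S *m v.
have vSc : v = S *m c by rewrite /c mulKVmx.
have eSig : (v^T *m invmx Sig *m v) 0 0 = dot c c.
  have hw : Sig *m (invmx S *m c) = v by rewrite /Sig -HS2 -mulmxA mulKVmx.
  have ui : Sig \in unitmx by rewrite /Sig -HS2 unitmx_mul uS.
  rewrite -mulmxA; have -> : invmx Sig *m v = invmx S *m c by rewrite -hw mulKmx.
  by rewrite /dot vSc trmx_mul Ssym mulmxA mulmxK.
have [Ha Hb] : a = dot c SLf /\ b = c^T *m SLg.
  have : v^T = c^T *m S by rewrite vSc trmx_mul Ssym.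
  rewrite -{1}(hsubmxK S) mul_mx_row /v tr_col_mx trmxK => /eq_row_mx [h1 h2].
  split => //; move: h1 => /(congr1 (fun M : 'M[R]_1 => M 0 0)).
  by rewrite tr_scalar_mx mxE eqxx mulr1n.
have hc := core Hbeta uS Ha Hb hmin.
rewrite eSig -hc.
rewrite /socp_feasible /feas'.
have key : forall u, socp_constraint k xs us z sigma_n B gradB ft gt gamma beta x u <->
   beta * Num.sqrt (dot (SLf + SLg *m u) (SLf + SLg *m u)) <= dot c (SLf + SLg *m u).
  move=> u; rewrite /socp_constraint.
  have eX : LftB gradB ft x + (LgtB gradB gt x *m u) 0 0 + muB k xs us z sigma_n x u
      + gamma (B x) = dot c (SLf + SLg *m u).
    rewrite -(Xdot Ha Hb) /a /b /hatLfB /hatLgB /muB.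
    rewrite -{1}(vsubmxK (mB k xs us z sigma_n x)) tr_col_mx mul_row_col mulmx1 mulmxDl.
    rewrite [(_ + (dsubmx _)^T *m u) 0 0]mxE [(_ + (dsubmx _)^T *m u) 0 0]mxE.
    rewrite [(usubmx _)^T 0 0]mxE; ring.
  have eS : sigmaB k xs us sigma_n x u = Num.sqrt (dot (SLf + SLg *m u) (SLf + SLg *m u)).
    rewrite /sigmaB -HS2 -(Sy S u) /dot trmx_mul Ssym !mulmxA.
    by [].
  rewrite eS; split => h; lra.
split.
  by move=> [u /key /(sqrt_le _ Hbeta (dot_ge0 _))]; exists u.
by move=> [u /(sqrt_le _ Hbeta (dot_ge0 _)) /key]; exists u.
Qed.
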